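(* For every graph $G$ and every field $\mathbb{F}$, $\chi(G)\le 2$ if and only if $\overline{\xi}_l(G,\mathbb{F})\le 2$.
   Context: An orthogonal representation of $G=(V,E)$ over $\mathbb{F}$ assigns $u_v\in\mathbb{F}^t$ to each $v$ with $\langle u_v,u_v\rangle\ne0$ and $\langle u_v,u_{v'}\rangle=0$ for adjacent $v,v'$, where $\langle x,y\rangle=\sum_i x_iy_i$ (over $\mathbb{C}$ one may use $\sum_i x_i\overline{y_i}$). Its locality is $\max_v\dim\mathrm{span}\{u_{v'}:v'\in\{v\}\cup N(v)\}$. $\overline{\xi}_l(G,\mathbb{F})$ is the minimum locality of an orthogonal representation of $G$ over $\mathbb{F}$; $\chi(G)$ is the chromatic number. *)

(* Defs.v *)
From mathcomp Require Import all_boot all_order all_algebra.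
Set Implicit Arguments. Unset Strict Implicit. Unset Printing Implicit Defensive.
Import GRing.Theory.
Local Open Scope ring_scope.

Record graph (V : finType) := Graph {
  adj : rel V;
  adj_sym : symmetric adj;
  adj_irr : irreflexive adj }.

Definition colorable (V : finType) (G : graph V) (k : nat) : bool :=
  [exists f : {ffun V -> 'I_k}, [forall x, forall y, adj G x y ==> (f x != f y)]].

Lemma colorable_card (V : finType) (G : graph V) : exists k, colorable G k.
Proof.
exists #|V|; apply/existsP; exists [ffun x => enum_rank x].
apply/forallP => x; apply/forallP => y; apply/implyP => Hxy.
rewrite !ffunE; apply/negP => /eqP /enum_rank_inj Exy.
by move: Hxy; rewrite Exy (adj_irr G).
Qed.

Definition chromatic_number (V : finType) (G : graph V) : nat :=
  ex_minn (colorable_card G).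

Definition dotp (F : fieldType) (t : nat) (x y : 'rV[F]_t) : F :=
  \sum_(i < t) x 0 i * y 0 i.

Definition orth_rep (F : fieldType) (V : finType) (G : graph V) (t : nat)
    (u : V -> 'rV[F]_t) : Prop :=
  (forall v, dotp (u v) (u v) != 0) /\
  (forall v w, adj G v w -> dotp (u v) (u w) = 0).

Definition local_dim (F : fieldType) (V : finType) (G : graph V) (t : nat)
    (u : V -> 'rV[F]_t) (v : V) : nat :=
  \rank (\sum_(w | (w == v) || adj G v w) <<u w>>)%MS.

Definition locality (F : fieldType) (V : finType) (G : graph V) (t : nat)
    (u : V -> 'rV[F]_t) : nat :=
  (\max_(v : V) local_dim G u v)%N.

(* "xi_l(G,F) <= k": minimum locality of an orthogonal representation of G
   over F (in any dimension t) is at most k, i.e. some orthogonal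
   representation has locality at most k. *)
Definition xi_l_le (F : fieldType) (V : finType) (G : graph V) (k : nat) : Prop :=
  exists (t : nat) (u : V -> 'rV[F]_t), orth_rep G u /\ (locality G u <= k)%N.

(* Main.v *)
Require Import Defs.
From mathcomp Require Import all_boot all_order all_algebra.
Set Implicit Arguments. Unset Strict Implicit. Unset Printing Implicit Defensive.
Import GRing.Theory.

Section Aux.
Local Open Scope ring_scope.
Variable F : fieldType.

Lemma dotpDl t (x y z : 'rV[F]_t) : dotp (x + y) z = dotp x z + dotp y z.
Proof. rewrite /dotp -big_split /=; apply: eq_bigr => i _; by rewrite mxE mulrDl. Qed.

Lemma dotpZl t a (x z : 'rV[F]_t) : dotp (a *: x) z = a * dotp x z.
Proof. rewrite /dotp mulr_sumr; apply: eq_bigr => i _; by rewrite mxE mulrA. Qed.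

Lemma dotp0l t (z : 'rV[F]_t) : dotp 0 z = 0.
Proof. rewrite /dotp big1 // => i _; by rewrite mxE mul0r. Qed.

Lemma dotp_delta (i j : 'I_2) :
  dotp (delta_mx 0 i : 'rV[F]_2) (delta_mx 0 j) = (i == j)%:R.
Proof.
rewrite /dotp (bigD1 i) //= big1 => [|k /negbTE ki].
  by rewrite !mxE !eqxx /= mul1r addr0 (eq_sym i j).
by rewrite !mxE ki /= mul0r.
Qed.

Variables (V : finType) (G : graph V) (t : nat) (u : V -> 'rV[F]_t).
Hypothesis Hu : orth_rep G u.
Hypothesis Hloc : (locality G u <= 2)%N.

Definition par x y := (u x <= u y)%MS.

Lemma u_neq0 x : u x != 0.
Proof. apply/eqP => E; have := Hu.1 x; by rewrite E dotp0l eqxx. Qed.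

Lemma par_sym x y : par x y -> par y x.
Proof.
move/sub_rVP => [a E]; apply/sub_rVP; exists a^-1.
have a0 : a != 0 by apply/eqP => a0; have := u_neq0 x; rewrite E a0 scale0r eqxx.
by rewrite E scalerA mulVf // scale1r.
Qed.

Lemma par_trans x y z : par x y -> par y z -> par x z.
Proof. exact: submx_trans. Qed.

Lemma adj_npar x y : adj G x y -> ~~ par x y.
Proof.
move=> Hxy; apply/negP => /sub_rVP [a E].
have := Hu.2 _ _ Hxy; rewrite E dotpZl => /eqP; rewrite mulf_eq0 => /orP [/eqP a0|].
  by have := u_neq0 x; rewrite E a0 scale0r eqxx.
by rewrite (negbTE (Hu.1 y)).
Qed.

Lemma key v w1 w2 : adj G v w1 -> adj G v w2 -> par w2 w1.
Proof.
move=> H1 H2.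
pose vec (i : 'I_3) := if val i == 0%N then u v else if val i == 1%N then u w1 else u w2.
pose W := \matrix_(i < 3) vec i.
set S := (\sum_(w | (w == v) || adj G v w) <<u w>>)%MS.
have inS w : (w == v) || adj G v w -> (u w <= S)%MS.
  by move=> Hw; apply: (sumsmx_sup w) => //; rewrite genmxE.
have WS : (W <= S)%MS.
  apply/row_subP => i; rewrite rowK /vec.
  case: ifP => _; first by apply: inS; rewrite eqxx.
  by case: ifP => _; apply: inS; rewrite ?H1 ?H2 orbT.
have rW : (\rank W <= 2)%N.
  apply: leq_trans (mxrankS WS) _; apply: leq_trans Hloc.
  exact: (leq_bigmax (F := fun v => local_dim G u v) v).
have : kermx W != 0 by rewrite kermx_eq0 /row_free; apply/negP => /eqP E; move: rW; rewrite E.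
move/rowV0Pn => [x /sub_kermxP Hx xn0].
rewrite mulmx_sum_row !big_ord_recr big_ord0 /= add0r !rowK /vec /= in Hx.
set x0 := x 0 _ in Hx; set x1 := x 0 _ in Hx; set x2 := x 0 _ in Hx.
have d1 : dotp (u w1) (u v) = 0 by apply: Hu.2; rewrite adj_sym.
have d2 : dotp (u w2) (u v) = 0 by apply: Hu.2; rewrite adj_sym.
have := congr1 (fun z => dotp z (u v)) Hx; rewrite /= dotp0l !dotpDl !dotpZl d1 d2 !mulr0 !addr0.
move/eqP; rewrite mulf_eq0 (negbTE (Hu.1 v)) orbF => /eqP x00.
rewrite x00 scale0r add0r in Hx.
have [x20|x2n0] := eqVneq x2 0.
  rewrite x20 scale0r addr0 in Hx.
  have x10 : x1 = 0.
    apply/eqP; apply: contraT => x1n0.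
    by move: Hx => /eqP; rewrite scaler_eq0 (negbTE x1n0) (negbTE (u_neq0 w1)).
  case/eqP: xn0; apply/rowP => j; rewrite mxE.
  case: j => -[|[|[|k]]] Hj; last by [].
  - by rewrite -x00; congr (x 0 _); apply: val_inj.
  - by rewrite -x10; congr (x 0 _); apply: val_inj.
  - by rewrite -x20; congr (x 0 _); apply: val_inj.
apply/sub_rVP; exists (- x1 / x2).
have : x2 *: u w2 = - (x1 *: u w1) by rewrite -(addKr (x1 *: u w1) (x2 *: u w2)) Hx addr0.
move=> E; apply: (scalerI x2n0); rewrite E scalerA mulrC mulfVK //.
by rewrite scaleNr.
Qed.

Lemma walk x p a b : path (adj G) x p -> par x a ->
  (forall w, adj G x w -> par w b) -> par (last x p) a \/ par (last x p) b.
Proof.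
elim: p x a b => [|y p IH] x a b /=; first by move=> _ H _; left.
move=> /andP [Hxy Hp] Hxa Hn.
have Hy : forall w, adj G y w -> par w a.
  by move=> w Hw; apply: par_trans Hxa; apply: (key (v:=y)) => //; rewrite adj_sym.
by case: (IH y b a Hp (Hn _ Hxy) Hy); auto.
Qed.


Lemma col2 : colorable G 2.
Proof.
pose r z := fingraph.root (adj G) z.
pose s z := odflt (r z) [pick w | adj G (r z) w].
have csym : connect_sym (adj G) by apply: sym_connect_sym; exact: adj_sym.
have dich z : par z (r z) \/ par z (s z).
  have : connect (adj G) (r z) z by rewrite csym connect_root.
  case/connectP => p Hp Ez.
  suff : par (last (r z) p) (r z) \/ par (last (r z) p) (s z) by rewrite -Ez.
  apply: walk => //; first by rewrite /par submx_refl.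
  move=> w Hw; rewrite /s; case: pickP => [s' Hs'|/(_ w)]; last by rewrite Hw.
  exact: (key (v := r z)).
apply/existsP; exists [ffun z => if par z (r z) then ord0 else ord_max].
apply/forallP => x; apply/forallP => y; apply/implyP => Hxy; rewrite !ffunE.
have rxy : r x = r y by apply/fingraph.rootP => //; apply: connect1.
have sxy : s x = s y by rewrite /s rxy.
have npar := adj_npar Hxy.
case: ifP => Hx; case: ifP => Hy //.
  by case/negP: npar; apply: (par_trans Hx); apply: par_sym; rewrite rxy.
case: (dich x); rewrite ?Hx // => Hx'.
case: (dich y); rewrite ?Hy // => Hy'.
by case/negP: npar; apply: (par_trans Hx'); apply: par_sym; rewrite sxy.
Qed.

End Aux.

Theorem mainTheorem6 (V : finType) (G : graph V) (F : fieldType) :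
  (chromatic_number G <= 2)%N <-> xi_l_le F G 2.
Proof.
split.
  rewrite /chromatic_number; case: ex_minnP => k /existsP [f /forallP Hf] _ k2.
  pose g v := widen_ord k2 (f v).
  exists 2, (fun v => delta_mx ord0 (g v) : 'rV[F]_2); split; first split.
  - by move=> v; rewrite dotp_delta eqxx oner_neq0.
  - move=> v w Hvw; rewrite dotp_delta.
    have := implyP (forallP (Hf v) w) Hvw.
    move=> H; suff -> : (g v == g w) = false by [].
    apply/negbTE; apply: contra H => /eqP E; apply/eqP/val_inj; exact: (congr1 val E).
  - by apply/bigmax_leqP => v _; exact: rank_leq_col.
move=> [t [u [Hu Hl]]].
rewrite /chromatic_number; case: ex_minnP => k _ Hmin.
exact: Hmin (col2 Hu Hl).
Qed.
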